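(* Let $G^*=(V_L,V_R,E^* )$ be drawn uniformly from $\mathcal{G}_{m,n,s,t}$ (assumed nonempty), and let $F$ be a viable set of edges. (1) Let $u\in V_L$ with $\deg_F(u)<t$, and let $v$ be uniformly sampled from $N_{G^*}(u)\setminus N_F(u)$. Then $$\Pr_{G^*,v}\left[\deg_F(v)>0\ \middle|\ F\subseteq E^*\right]\le\frac{|\{x\in V_R:\deg_F(x)>0\}|}{|V_R|}.$$ (2) Let $u\in V_R$ with $\deg_F(u)<s$, and let $v$ be uniformly sampled from $N_{G^*}(u)\setminus N_F(u)$. Then $$\Pr_{G^*,v}\left[\deg_F(v)>0\ \middle|\ F\subseteq E^*\right]\le\frac{|\{x\in V_L:\deg_F(x)>0\}|}{|V_L|}.$$
   Context: $\mathcal{G}_{m,n,s,t}$ is the set of bipartite graphs on fixed vertex sets $V_L$ ($|V_L|=n$, each of degree $t$) and $V_R$ ($|V_R|=m$, each of degree $s$). For a set of edges $F\subseteq\binom{V_L\cup V_R}{2}$ and a vertex $v$, $N_F(v)=\{u:\{v,u\}\in F\}$ and $\deg_F(v)=|N_F(v)|$. $F$ is viable if $F\subseteq E(G)$ for some $G\in\mathcal{G}_{m,n,s,t}$. *)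

(* Defs.v *)
From mathcomp Require Import all_boot all_order all_algebra.
Unset Printing Implicit Defensive.
Import Order.TTheory GRing.Theory Num.Theory.

(* V_L = 'I_n, V_R = 'I_m.  An edge {x,y} with x in V_L, y in V_R is the pair (x,y). *)
Definition edges (n m : nat) := {set 'I_n * 'I_m}.

Definition NL {n m} (F : edges n m) (x : 'I_n) : {set 'I_m} := [set y | (x, y) \in F].
Definition NR {n m} (F : edges n m) (y : 'I_m) : {set 'I_n} := [set x | (x, y) \in F].
Definition degL {n m} (F : edges n m) (x : 'I_n) : nat := #|NL F x|.
Definition degR {n m} (F : edges n m) (y : 'I_m) : nat := #|NR F y|.

Definition inGclass m n s t (G : edges n m) : bool :=
  [forall x, degL G x == t] && [forall y, degR G y == s].

Definition viable m n s t (F : edges n m) : Prop :=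
  exists G : edges n m, inGclass m n s t G && (F \subset G).

(* Pr_{G*,v}[deg_F(v) > 0 | F ⊆ E*] for u in V_L, G* uniform in G_{m,n,s,t},
   v uniform in N_{G*}(u) \ N_F(u). *)
Local Open Scope ring_scope.
Definition condprobL m n s t (F : edges n m) (u : 'I_n) : rat :=
  (\sum_(G : edges n m | inGclass m n s t G && (F \subset G))
     ((#|[set v in NL G u :\: NL F u | (0 < degR F v)%N]|%:R)%R
        / #|NL G u :\: NL F u|%:R))
  / #|[set G : edges n m | inGclass m n s t G && (F \subset G)]|%:R.

Definition condprobR m n s t (F : edges n m) (u : 'I_m) : rat :=
  (\sum_(G : edges n m | inGclass m n s t G && (F \subset G))
     ((#|[set v in NR G u :\: NR F u | (0 < degL F v)%N]|%:R)%R
        / #|NR G u :\: NR F u|%:R))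
  / #|[set G : edges n m | inGclass m n s t G && (F \subset G)]|%:R.

(* Main.v *)
Require Import Defs.
From mathcomp Require Import all_boot all_order all_algebra.
Import Order.TTheory GRing.Theory Num.Theory.

Definition sw {n m} (G : edges n m) (u w : 'I_n) (x z : 'I_m) : edges n m :=
  [set e | ((e \in G) && (e != (u,x)) && (e != (w,z))) || (e == (u,z)) || (e == (w,x))].

Ltac simp_all uw wu xz zx ux wz uz wx :=
  rewrite /NL /NR /sw !inE !xpair_eqE ?eqxx ?(negbTE uw) ?(negbTE wu) ?(negbTE xz) ?(negbTE zx)
   ?ux ?wz ?(negbTE uz) ?(negbTE wx) /=.

Lemma sw_NL n m (G : edges n m) u w x z :
  u != w -> x != z -> (u,x) \in G -> (w,z) \in G -> (u,z) \notin G -> (w,x) \notin G ->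
  forall a, NL (sw G u w x z) a =
    if a == u then z |: (NL G u :\ x) else if a == w then x |: (NL G w :\ z) else NL G a.
Proof.
move=> uw xz ux wz uz wx a; apply/setP => b.
have wu : w != u by rewrite eq_sym. have zx : z != x by rewrite eq_sym.
have [->|au] := eqVneq a u; [|have [->|aw] := eqVneq a w];
have [->|bx] := eqVneq b x; try have [->|bz] := eqVneq b z;
simp_all uw wu xz zx ux wz uz wx; rewrite ?(negbTE au) ?(negbTE aw) ?(negbTE bx) ?(negbTE bz) /=;
rewrite ?andbT ?andbF ?orbT ?orbF //.
Qed.

Lemma sw_NR n m (G : edges n m) u w x z :
  u != w -> x != z -> (u,x) \in G -> (w,z) \in G -> (u,z) \notin G -> (w,x) \notin G ->
  forall b, NR (sw G u w x z) b =
    if b == x then w |: (NR G x :\ u) else if b == z then u |: (NR G z :\ w) else NR G b.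
Proof.
move=> uw xz ux wz uz wx b; apply/setP => a.
have wu : w != u by rewrite eq_sym. have zx : z != x by rewrite eq_sym.
have [->|au] := eqVneq a u; [|have [->|aw] := eqVneq a w];
have [->|bx] := eqVneq b x; try have [->|bz] := eqVneq b z;
simp_all uw wu xz zx ux wz uz wx; rewrite ?(negbTE au) ?(negbTE aw) ?(negbTE bx) ?(negbTE bz) /=;
rewrite ?andbT ?andbF ?orbT ?orbF //.
Qed.


Lemma sw_inv n m (G : edges n m) u w x z :
  u != w -> x != z -> (u,x) \in G -> (w,z) \in G -> (u,z) \notin G -> (w,x) \notin G ->
  sw (sw G u w x z) u w z x = G.
Proof.
move=> uw xz ux wz uz wx; apply/setP => -[a b].
have wu : w != u by rewrite eq_sym. have zx : z != x by rewrite eq_sym.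
have [->|au] := eqVneq a u; [|have [->|aw] := eqVneq a w];
have [->|bx] := eqVneq b x; try have [->|bz] := eqVneq b z;
simp_all uw wu xz zx ux wz uz wx; rewrite ?(negbTE au) ?(negbTE aw) ?(negbTE bx) ?(negbTE bz) /=;
rewrite ?andbT ?andbF ?orbT ?orbF //.
Qed.

Lemma card_swap (T : finType) (A : {set T}) x z :
  x \in A -> z \notin A -> #|z |: (A :\ x)| = #|A|.
Proof.
move=> xA zA; rewrite cardsU1 (cardsD1 x A) xA !inE negb_and zA orbT.
by [].
Qed.

Lemma card_decomp (T : finType) (A : {set T}) (f : T -> nat) N :
  (forall x, f x <= N) ->
  #|A| = \sum_(c < N.+1) #|[set x in A | f x == c]|.
Proof.
move=> fN.
rewrite -sum1_card.
transitivity (\sum_(c < N.+1) \sum_(x in A) (f x == c : nat)).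
  rewrite exchange_big /=.
  apply: eq_bigr => x xA.
  have fx : f x < N.+1 by rewrite ltnS.
  rewrite (bigD1 (Ordinal fx)) //= eqxx big1 // => c /negbTE.
  by rewrite eq_sym -val_eqE /= => ->.
apply: eq_bigr => c _; rewrite -sum1_card big_mkcond [RHS]big_mkcond /=.
apply: eq_bigr => x _; rewrite !inE.
by case: (x \in A); case: (f x == c).
Qed.

Lemma card_dpair (T1 T2 : finType) (A : {set T1}) (D : T1 -> {set T2}) k :
  (forall a, a \in A -> #|D a| = k) ->
  #|[set p : T1 * T2 | (p.1 \in A) && (p.2 \in D p.1)]| = #|A| * k.
Proof.
move=> hD.
rewrite -sum1_card big_mkcond /=.
transitivity (\sum_(a : T1) \sum_(b : T2) (if (a, b) \in [set p : T1 * T2 | (p.1 \in A) && (p.2 \in D p.1)] then 1 else 0)).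
  by rewrite pair_bigA; apply: eq_bigr; case.
rewrite -sum1_card big_distrl /= [RHS]big_mkcond /=.
apply: eq_bigr => a _.
case aA: (a \in A); last first.
  by rewrite big1 // => b _; rewrite inE aA.
rewrite mul1n -(hD a aA) -sum1_card [RHS]big_mkcond /=.
by apply: eq_bigr => b _; rewrite inE aA.
Qed.


Definition inS m n s t (F G : edges n m) := inGclass m n s t G && (F \subset G).

Lemma sw_inS m n s t (F G : edges n m) u w x z :
  inS m n s t F G ->
  u != w -> x != z -> (u,x) \in G -> (w,z) \in G -> (u,z) \notin G -> (w,x) \notin G ->
  (u,x) \notin F -> (w,z) \notin F -> inS m n s t F (sw G u w x z).
Proof.
move=> /andP[/andP[/forallP hL /forallP hR] FG] uw xz ux wz uz wx uxF wzF.
apply/andP; split; first (apply/andP; split).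
- apply/forallP => a; rewrite /degL sw_NL //.
  case: ifP => _; first by rewrite card_swap ?inE //; exact: hL.
  case: ifP => _; first by rewrite card_swap ?inE //; exact: hL.
  exact: hL.
- apply/forallP => b; rewrite /degR sw_NR //.
  case: ifP => _; first by rewrite card_swap ?inE //; exact: hR.
  case: ifP => _; first by rewrite card_swap ?inE //; exact: hR.
  exact: hR.
- apply/subsetP => e eF; rewrite /sw inE (subsetP FG e eF) /=.
  have -> : e != (u, x) by apply: contraNneq uxF => <-.
  by have -> : e != (w, z) by apply: contraNneq wzF => <-.
Qed.

Lemma switch_le m n s t (F : edges n m) u x z :
  x != z -> (u,x) \notin F -> (forall a, (a,z) \notin F) ->
  #|[set G | inS m n s t F G && ((u,x) \in G) && ((u,z) \notin G)]| <=
  #|[set G | inS m n s t F G && ((u,z) \in G) && ((u,x) \notin G)]|.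
Proof.
move=> xz uxF zF.
pose cf (G : edges n m) := #|NR G x :&: NR G z|.
have cfn : forall G, cf G <= n.
  by move=> G; rewrite /cf; apply: leq_trans (max_card _) _; rewrite card_ord.
rewrite (card_decomp _ _ _ _ cfn) [X in _ <= X](card_decomp _ _ _ _ cfn).
apply: leq_sum => c _.
set Ac := [set G in _ | cf G == c]. set Bc := [set G in _ | cf G == c].
pose R := [set p : edges n m * 'I_n | (p.1 \in Ac) && (p.2 \in NR p.1 z :\: NR p.1 x)].
pose R' := [set p : edges n m * 'I_n | (p.1 \in Bc) && (p.2 \in NR p.1 x :\: NR p.1 z)].
have degs : forall G, inS m n s t F G -> forall y, #|NR G y| = s.
  by move=> G /andP[/andP[_ /forallP hR] _] y; apply/eqP; exact: hR.
have cR : #|R| = #|Ac| * (s - c).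
  rewrite /R; apply: (@card_dpair _ _ Ac (fun G => NR G z :\: NR G x) (s - c)) => G; rewrite !inE => /andP[/andP[/andP[GS uxG] uzG] /eqP cG].
  by rewrite cardsD setIC -/(cf G) cG degs.
have cR' : #|R'| = #|Bc| * (s - c).
  rewrite /R'; apply: (@card_dpair _ _ Bc (fun G => NR G x :\: NR G z) (s - c)) => G; rewrite !inE => /andP[/andP[/andP[GS uxG] uzG] /eqP cG].
  by rewrite cardsD -/(cf G) cG degs.
have key : forall p, p \in R -> [/\ p.1 \in Ac, (u, x) \in p.1, (p.2, z) \in p.1,
    (u, z) \notin p.1 & (p.2, x) \notin p.1].
  case=> G w; rewrite !inE /= => /andP[GA /andP[wx wz]].
  move: (GA) => /andP[/andP[/andP[GS uxG] uzG] _].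
  by split.
have sub : [set (sw p.1 u p.2 x z, p.2) | p in R] \subset R'.
  apply/subsetP => q /imsetP[[G w] pR ->].
  move: (key _ pR) => /= [GA uxG wzG uzG wxG]; move: GA; rewrite /= !inE.
  have uw : u != w by apply: contraNneq uzG => ->.
  move=> /andP[/andP[/andP[GS _] _] /eqP cG].
  have zx : z != x by rewrite eq_sym.
  have wu : w != u by rewrite eq_sym.
  have hNR := @sw_NR n m G u w x z uw xz uxG wzG uzG wxG.
  have cf' : cf (sw G u w x z) = c.
    have E : (w |: NR G x :\ u) :&: (u |: NR G z :\ w) = NR G x :&: NR G z.
      apply/setP => a; rewrite !inE.
      have [->|au] := eqVneq a u; first by rewrite (negbTE uw) (negbTE uzG) /= !andbF.
      have [->|aw] := eqVneq a w; first by rewrite (negbTE wxG) /=.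
      done.
    by rewrite /cf !hNR eqxx (negbTE zx) eqxx E -cG.
  rewrite (@sw_inS m n s t F G u w x z GS) //= cf' eqxx !xpair_eqE !eqxx.
  by rewrite (negbTE zx) (negbTE uw) (negbTE xz) (negbTE wu) /= ?andbF ?andbT ?orbF ?orbT.
have inj : {in R &, injective (fun p => (sw p.1 u p.2 x z, p.2))}.
  move=> [G1 w1] [G2 w2] p1 p2 /= [E Ew]; subst w2.
  move: (key _ p1) (key _ p2) => /= [_ ux1 wz1 uz1 wx1] [_ ux2 wz2 uz2 wx2].
  have uw : u != w1 by apply: contraNneq uz1 => ->.
  congr pair; rewrite -(@sw_inv _ _ G1 u w1 x z uw xz ux1 wz1 uz1 wx1).
  by rewrite -[RHS](@sw_inv _ _ G2 u w1 x z uw xz ux2 wz2 uz2 wx2) E.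
have le : #|Ac| * (s - c) <= #|Bc| * (s - c).
  by rewrite -cR -cR' -(card_in_imset inj); exact: subset_leq_card.
have [->|[G GA]] := set_0Vmem Ac; first by rewrite cards0.
have cs : c < s.
  move: GA; rewrite /Ac !inE => /andP[/andP[/andP[GS uxG] uzG] /eqP <-].
  rewrite -(degs G GS x) /cf; apply: proper_card; apply/properP; split; first exact: subsetIl.
  by exists u; rewrite !inE ?uxG // negb_and uzG orbT.
by move: le; rewrite leq_pmul2r // subn_gt0.
Qed.


Lemma double_count (T1 T2 : finType) (P : pred T1) (Q : T1 -> T2 -> bool) :
  \sum_(a | P a) #|[set b | Q a b]| = \sum_b #|[set a | P a && Q a b]|.
Proof.
transitivity (\sum_(a | P a) \sum_b (Q a b : nat)).
  apply: eq_bigr => a _; rewrite -sum1_card big_mkcond /=.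
  by apply: eq_bigr => b _; rewrite inE; case: (Q a b).
rewrite exchange_big /=; apply: eq_bigr => b _.
rewrite -sum1_card big_mkcond [RHS]big_mkcond /=.
by apply: eq_bigr => a _; rewrite inE; case: (P a); case: (Q a b).
Qed.

Lemma fx_le m n s t (F : edges n m) u x z :
  x != z -> (u,x) \notin F -> (forall a, (a,z) \notin F) ->
  #|[set G | inS m n s t F G && ((u,x) \in G)]| <= #|[set G | inS m n s t F G && ((u,z) \in G)]|.
Proof.
move=> xz uxF zF.
rewrite -(cardsID [set G : edges n m | (u,z) \in G] [set G : edges n m | inS m n s t F G && ((u,x) \in G)]).
rewrite -(cardsID [set G : edges n m | (u,x) \in G] [set G : edges n m | inS m n s t F G && ((u,z) \in G)]).
have E : [set G | inS m n s t F G && ((u, x) \in G)] :&: [set G : edges n m | (u, z) \in G] =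
         [set G | inS m n s t F G && ((u, z) \in G)] :&: [set G : edges n m | (u, x) \in G].
  by apply/setP => G; rewrite !inE; case: (inS _ _ _ _ _ G); case: ((u,x) \in G); case: ((u,z) \in G).
rewrite E leq_add2l.
have E1 : [set G | inS m n s t F G && ((u, x) \in G) & (u, z) \notin G] =
  [set G | inS m n s t F G & (u, x) \in G] :\: [set G : edges n m | (u, z) \in G].
  by apply/setP => G; rewrite !inE; case: (inS _ _ _ _ _ G); case: ((u,x) \in G); case: ((u,z) \in G).
have E2 : [set G | inS m n s t F G && ((u, z) \in G) & (u, x) \notin G] =
  [set G | inS m n s t F G & (u, z) \in G] :\: [set G : edges n m | (u, x) \in G].
  by apply/setP => G; rewrite !inE; case: (inS _ _ _ _ _ G); case: ((u,x) \in G); case: ((u,z) \in G).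
by rewrite -E1 -E2; exact: (@switch_le m n s t F u x z xz uxF zF).
Qed.


Lemma part1 m n s t (F : edges n m) (u : 'I_n) : (degL F u < t)%N ->
  (condprobL m n s t F u <= #|[set x : 'I_m | (0 < degR F x)%N]|%:R / #|'I_m|%:R)%R.
Proof.
move=> du.
set Ps := [set x : 'I_m | (0 < degR F x)%N].
pose K := t - degL F u.
pose f (y : 'I_m) := #|[set G | inS m n s t F G && (y \in NL G u :\: NL F u)]|.
pose cS := #|[set G : edges n m | inGclass m n s t G && (F \subset G)]|.
have hK : forall G, inS m n s t F G -> #|NL G u :\: NL F u| = K.
  move=> G /andP[/andP[/forallP hL _] FG].
  have sub : NL F u \subset NL G u by apply/subsetP => y; rewrite !inE; apply: (subsetP FG).
  by rewrite cardsD (setIidPr sub) -/(degL G u) (eqP (hL u)).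
have num : \sum_(G | inGclass m n s t G && (F \subset G))
      #|[set v in NL G u :\: NL F u | (0 < degR F v)%N]| = \sum_(y in Ps) f y.
  rewrite (@double_count _ _ (fun G => inGclass m n s t G && (F \subset G))
            (fun G v => (v \in NL G u :\: NL F u) && (0 < degR F v)%N)).
  rewrite [RHS]big_mkcond /=; apply: eq_bigr => y _.
  rewrite /f inE; case: (0 < degR F y)%N.
    by apply: eq_card => G; rewrite !inE andbT.
  by apply/eqP; rewrite cards_eq0; apply/eqP/setP => G; rewrite !inE !andbF.
have tot : K * cS = \sum_(y in Ps) f y + \sum_(y in ~: Ps) f y.
  transitivity (\sum_(G | inGclass m n s t G && (F \subset G)) #|[set v | v \in NL G u :\: NL F u]|).
    rewrite mulnC /cS -sum_nat_const; apply: eq_big => G; first by rewrite inE.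
    by rewrite inE => GS; rewrite -(hK G GS); apply: eq_card => y; rewrite inE.
  rewrite (@double_count _ _ (fun G => inGclass m n s t G && (F \subset G))
            (fun G v => (v \in NL G u :\: NL F u))).
  rewrite (bigID (fun y => y \in Ps)) /=; congr (_ + _); apply: eq_bigl => y; by rewrite ?inE.
have key : forall x z, x \in Ps -> z \notin Ps -> f x <= f z.
  move=> x z xP zP.
  have xz : x != z by apply: contraNneq zP => <-.
  have zF : forall a, (a, z) \notin F.
    move=> a; apply/negP => azF; move: zP; rewrite inE => /negP; apply.
    by rewrite /degR; apply/card_gt0P; exists a; rewrite inE.
  case xF: (x \in NL F u).
    rewrite /f; have -> : [set G | inS m n s t F G && (x \in NL G u :\: NL F u)] = set0.
      by apply/setP => G; rewrite inE in_setD xF /= !inE andbF.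
    by rewrite cards0.
  have zNF : z \in NL F u = false by rewrite inE; apply/negbTE.
  have ex : forall y, y \in NL F u = false ->
      f y = #|[set G | inS m n s t F G && ((u,y) \in G)]|.
    by move=> y yF; apply: eq_card => G; rewrite inE in_setD yF /= !inE.
  rewrite !ex //; apply: (@fx_le m n s t F u x z xz) => //; by move: xF; rewrite inE => ->.
set A := \sum_(y in Ps) f y. set B := \sum_(y in ~: Ps) f y.
have AB : A * #|~: Ps| <= #|Ps| * B.
  rewrite /A big_distrl /= -sum_nat_const; apply: leq_sum => x xP.
  rewrite /B mulnC -sum_nat_const; apply: leq_sum => z; rewrite inE; exact: key.
have main : A * #|'I_m| <= #|Ps| * (K * cS).
  by rewrite -(cardsC Ps) mulnDr tot mulnDr mulnC leq_add2l.
rewrite /condprobL.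
have -> : (\sum_(G | inGclass m n s t G && (F \subset G))
   ((#|[set v in NL G u :\: NL F u | (0 < degR F v)%N]|%:R)%R
        / #|NL G u :\: NL F u|%:R) = A%:R / K%:R :> rat)%R.
  rewrite /A -num natr_sum mulr_suml; apply: eq_bigr => G GS; by rewrite hK.
rewrite -/cS.
have [m0|mpos] := posnP #|'I_m|.
  have A0 : A = 0.
    rewrite /A big1 // => y _; move: (ltn_ord y); by rewrite -[X in _ < X](card_ord m) m0.
  by rewrite A0 !mul0r divr_ge0 ?ler0n.
have [c0|cpos] := posnP cS.
  by rewrite c0 invr0 mulr0 divr_ge0 ?ler0n.
have Kpos : 0 < K by rewrite subn_gt0.
rewrite -mulrA -invfM -natrM ler_pdivrMr ?ltr0n ?muln_gt0 ?Kpos //.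
rewrite mulrAC ler_pdivlMr ?ltr0n // -!natrM ler_nat.
exact: main.
Qed.


Definition tr {n m} (G : edges n m) : edges m n := [set e | (e.2, e.1) \in G].

Lemma trK n m (G : edges n m) : tr (tr G) = G.
Proof. by apply/setP => -[a b]; rewrite !inE. Qed.

Lemma tr_inj n m : injective (@tr n m).
Proof. exact: can_inj (@trK n m). Qed.

Lemma NL_tr n m (G : edges n m) y : NL (tr G) y = NR G y.
Proof. by apply/setP => a; rewrite !inE. Qed.

Lemma NR_tr n m (G : edges n m) x : NR (tr G) x = NL G x.
Proof. by apply/setP => a; rewrite !inE. Qed.

Lemma degL_tr n m (G : edges n m) y : degL (tr G) y = degR G y.
Proof. by rewrite /degL NL_tr. Qed.

Lemma degR_tr n m (G : edges n m) x : degR (tr G) x = degL G x.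
Proof. by rewrite /degR NR_tr. Qed.

Lemma inG_tr m n s t (G : edges n m) : inGclass n m t s (tr G) = inGclass m n s t G.
Proof.
rewrite /inGclass andbC; congr (_ && _); apply: eq_forallb => x;
  by rewrite ?degL_tr ?degR_tr.
Qed.

Lemma sub_tr n m (F G : edges n m) : (tr F \subset tr G) = (F \subset G).
Proof.
apply/subsetP/subsetP => h [a b]; last by rewrite !inE => /h.
by move=> abF; have := h (b, a); rewrite !inE; apply.
Qed.

Lemma condR_tr m n s t (F : edges n m) u :
  condprobR m n s t F u = condprobL n m t s (tr F) u.
Proof.
rewrite /condprobL /condprobR.
congr (_ / _)%R.
  rewrite (reindex (@tr m n) (onW_bij _ (Bijective (@trK m n) (@trK n m)))) /=.
  apply: eq_big => G; first by rewrite inG_tr -sub_tr trK.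
  move=> _; rewrite !NR_tr !NL_tr; congr (_%:R / _%:R)%R; apply: eq_card => v; by rewrite in_set [RHS]in_set degR_tr.
congr (_%:R)%R; rewrite -!sum1_card (reindex (@tr m n) (onW_bij _ (Bijective (@trK m n) (@trK n m)))) /=.
by apply: eq_bigl => G; rewrite !inE inG_tr -sub_tr trK.
Qed.


Local Open Scope ring_scope.

Theorem lemma4p4 (m n s t : nat) (F : edges n m) :
  (exists G : edges n m, inGclass m n s t G) ->
  viable m n s t F ->
  (forall u : 'I_n, (degL F u < t)%N ->
     condprobL m n s t F u
       <= #|[set x : 'I_m | (0 < degR F x)%N]|%:R / #|'I_m|%:R) /\
  (forall u : 'I_m, (degR F u < s)%N ->
     condprobR m n s t F u
       <= #|[set x : 'I_n | (0 < degL F x)%N]|%:R / #|'I_n|%:R).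
Proof.
move=> _ _; split => u du; first exact: part1.
rewrite condR_tr.
have := @part1 n m t s (tr F) u; rewrite degL_tr => /(_ du).
have -> : [set x : 'I_n | (0 < degR (tr F) x)%N] = [set x : 'I_n | (0 < degL F x)%N].
  by apply/setP => x; rewrite !in_set degR_tr.
by [].
Qed.
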